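(* Let $\mathfrak{g}$ be a real Lie algebra of dimension $2n$ and let $V\subset\mathfrak{g}$ be a subspace of dimension $n$ such that: (1) the linear map $\tilde N^H\colon V^{\mathrm{ann}}\to\Lambda^2V^*$ has rank three; (2) its image $W=\operatorname{im}\tilde N^H$ consists of simple forms, i.e. $\eta\wedge\eta=0$ for all $\eta\in W$; (3) there is no $\sigma\in V^*\setminus\{0\}$ such that $\sigma\wedge\eta=0$ for all $\eta\in W$. Then for any Lie subalgebra $H\subset\mathfrak{g}$ complementary to $V$ there exists a $\mathrm{GL}(n,\mathbb{R})$-structure compatible with the splitting $\mathfrak{g}=V\oplus H$ whose intrinsic torsion satisfies $\tau_2=0=\tau_5=\tau_6$.
   Context: $d$ denotes the Chevalley--Eilenberg differential on $\Lambda\mathfrak{g}^*$, so $d\xi(X,Y)=-\xi([X,Y])$ for $\xi\in\mathfrak{g}^*$. $V^{\mathrm{ann}}\subset\mathfrak{g}^*$ is the annihilator of $V$, and $\tilde N^H(\xi)=d\xi|_{V\times V}\in\Lambda^2V^*$. A $\mathrm{GL}(n,\mathbb{R})$-structure compatible with $\mathfrak{g}=V\oplus H$ is a pseudoriemannian (necessarily neutral) metric $g$ on $\mathfrak{g}$ with $g(KX,KY)=-g(X,Y)$, where $K=\mathrm{id}_V-\mathrm{id}_H$; equivalently a nondegenerate two-form $F(X,Y)=g(KX,Y)$ vanishing on $V\times V$ and on $H\times H$. In this setting the components $\tau_1+\tau_2$ of the intrinsic torsion correspond (up to a nonzero constant factor) to the tensor $A(X,Y,Z)=g([X,Y],Z)$,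 $X,Y,Z\in V$, viewed in $\Lambda^2V^*\otimes V^*=\Lambda^3V^*\oplus W_2$, where $\tau_1$ is its totally skew part and $\tau_2$ its component in the complement $W_2$ (the kernel of the alternation map $\Lambda^2V^*\otimes V^*\to\Lambda^3V^*$); thus $\tau_2=0$ means that $A$ is totally skew-symmetric. Similarly $\tau_5+\tau_6$ correspond to $B(X,Y,Z)=g([X,Y],Z)$ for $X,Y,Z\in H$, so $\tau_5=\tau_6=0$ means $B=0$. *)

(* Defs.v *)
From HB Require Import structures.
From mathcomp Require Import all_boot all_order all_algebra.
From mathcomp Require Import reals.
Set Implicit Arguments. Unset Strict Implicit. Unset Printing Implicit Defensive.
Import GRing.Theory Num.Theory.
Local Open Scope ring_scope.

(* Subspaces of g are row spaces of square matrices (mxalgebra).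
   A linear form xi in g^* is a column vector, acting by X |-> (X *m xi) 0 0. *)

Section Defs.
Variable R : realType.
Variable m : nat.
Local Notation vec := 'rV[R]_m.

Definition lie_bracket (br : vec -> vec -> vec) : Prop :=
  [/\ forall (a : R) X Y Z, br (a *: X + Y) Z = a *: br X Z + br Y Z,
      forall (a : R) X Y Z, br X (a *: Y + Z) = a *: br X Y + br X Z,
      forall X, br X X = 0 &
      forall X Y Z, br X (br Y Z) + br Y (br Z X) + br Z (br X Y) = 0].

Definition lie_subalgebra (br : vec -> vec -> vec) (H : 'M[R]_m) : Prop :=
  forall X Y : vec, (X <= H)%MS -> (Y <= H)%MS -> (br X Y <= H)%MS.

Definition complementary (V H : 'M[R]_m) : Prop :=
  (forall X : vec, exists v h : vec, [/\ (v <= V)%MS, (h <= H)%MS & X = v + h]) /\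
  (forall v : vec, (v <= V)%MS -> (v <= H)%MS -> v = 0).

Definition form_app (xi : 'cV[R]_m) (X : vec) : R := (X *m xi) 0 0.

Definition in_ann (V : 'M[R]_m) (xi : 'cV[R]_m) : Prop :=
  forall X : vec, (X <= V)%MS -> form_app xi X = 0.

(* Chevalley--Eilenberg differential: d xi (X,Y) = - xi([X,Y]).
   N^H(xi) is its restriction to V x V (arguments X, Y are taken in V). *)
Definition dform (br : vec -> vec -> vec) (xi : 'cV[R]_m) (X Y : vec) : R :=
  - form_app xi (br X Y).

Definition wedge12 (s : vec -> R) (e : vec -> vec -> R) (X Y Z : vec) : R :=
  s X * e Y Z - s Y * e X Z + s Z * e X Y.

Definition wedge22 (e f : vec -> vec -> R) (X Y Z W : vec) : R :=
  e X Y * f Z W - e X Z * f Y W + e X W * f Y Z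
  + e Z W * f X Y - e Y W * f X Z + e Y Z * f X W.

Definition NH_rank3 (br : vec -> vec -> vec) (V : 'M[R]_m) : Prop :=
  exists xi1 xi2 xi3 : 'cV[R]_m,
  [/\ in_ann V xi1, in_ann V xi2, in_ann V xi3,
      (forall a1 a2 a3 : R,
         (forall X Y : vec, (X <= V)%MS -> (Y <= V)%MS ->
            a1 * dform br xi1 X Y + a2 * dform br xi2 X Y + a3 * dform br xi3 X Y = 0) ->
         [/\ a1 = 0, a2 = 0 & a3 = 0]) &
      (forall xi, in_ann V xi -> exists a1 a2 a3 : R,
         forall X Y : vec, (X <= V)%MS -> (Y <= V)%MS ->
           dform br xi X Y =
             a1 * dform br xi1 X Y + a2 * dform br xi2 X Y + a3 * dform br xi3 X Y)].

Definition NH_image_simple (br : vec -> vec -> vec) (V : 'M[R]_m) : Prop :=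
  forall xi, in_ann V xi ->
  forall X Y Z W : vec, (X <= V)%MS -> (Y <= V)%MS -> (Z <= V)%MS -> (W <= V)%MS ->
    wedge22 (dform br xi) (dform br xi) X Y Z W = 0.

(* (3): no nonzero sigma in V^* with sigma ^ eta = 0 for all eta in W.
   (Every element of V^* is the restriction of some linear form on g.) *)
Definition NH_no_common_factor (br : vec -> vec -> vec) (V : 'M[R]_m) : Prop :=
  ~ exists sigma : 'cV[R]_m,
      (exists X : vec, (X <= V)%MS /\ form_app sigma X != 0) /\
      (forall xi, in_ann V xi ->
         forall X Y Z : vec, (X <= V)%MS -> (Y <= V)%MS -> (Z <= V)%MS ->
           wedge12 (form_app sigma) (dform br xi) X Y Z = 0).

Definition bil (G : 'M[R]_m) (X Y : vec) : R := (X *m G *m Y^T) 0 0.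

(* GL(n,R)-structure compatible with g = V (+) H: a pseudoriemannian metric
   (symmetric, nondegenerate) with g(KX,KY) = -g(X,Y), K = id_V - id_H;
   written with X = v1 + h1, Y = v2 + h2, so KX = v1 - h1, KY = v2 - h2. *)
Definition compatible_GL_structure (V H : 'M[R]_m) (G : 'M[R]_m) : Prop :=
  [/\ G^T = G, G \in unitmx &
      forall v1 v2 h1 h2 : vec, (v1 <= V)%MS -> (v2 <= V)%MS ->
        (h1 <= H)%MS -> (h2 <= H)%MS ->
        bil G (v1 - h1) (v2 - h2) = - bil G (v1 + h1) (v2 + h2)].

(* tau_2 = 0 : A(X,Y,Z) = g([X,Y],Z) on V is totally skew-symmetric *)
Definition tau2_zero (br : vec -> vec -> vec) (V G : 'M[R]_m) : Prop :=
  forall X Y Z : vec, (X <= V)%MS -> (Y <= V)%MS -> (Z <= V)%MS ->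
    bil G (br X Y) Z = - bil G (br Y X) Z /\ bil G (br X Y) Z = - bil G (br X Z) Y.

(* tau_5 = tau_6 = 0 : B(X,Y,Z) = g([X,Y],Z) vanishes on H *)
Definition tau56_zero (br : vec -> vec -> vec) (H G : 'M[R]_m) : Prop :=
  forall X Y Z : vec, (X <= H)%MS -> (Y <= H)%MS -> (Z <= H)%MS ->
    bil G (br X Y) Z = 0.

End Defs.

(* Main.v *)
Require Import Defs.
From HB Require Import structures.
From mathcomp Require Import all_boot all_order all_algebra.
From mathcomp Require Import reals.
From mathcomp.algebra_tactics Require Import ring lra.
From Stdlib Require Import Classical.
Import GRing.Theory Num.Theory.
Local Open Scope ring_scope.

Lemma lin_repr (R : fieldType) (n : nat) (f : 'rV[R]_n -> R) :
  (forall k x y, f (k *: x + y) = k * f x + f y) ->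
  forall a, f a = (a *m \col_i f 'e_i) 0 0.
Proof.
move=> hf a.
have f0 : f 0 = 0.
  have := hf 1 0 0; rewrite scaler0 addr0 mul1r => h.
  by apply: (addrI (f 0)); rewrite -h addr0.
have fD : forall x y, f (x + y) = f x + f y.
  by move=> x y; rewrite -{1}[x]scale1r hf mul1r.
have fZ : forall k x, f (k *: x) = k * f x.
  by move=> k x; rewrite -[k *: x]addr0 hf f0 addr0.
rewrite {1}(row_sum_delta a) mxE.
have -> : forall (s : seq 'I_n), f (\sum_(j <- s) a 0 j *: 'e_j) = \sum_(j <- s) a 0 j * f 'e_j.
  elim=> [|j s IH]; first by rewrite !big_nil.
  by rewrite !big_cons fD fZ IH.
by apply: eq_bigr => j _; rewrite mxE.
Qed.

Lemma cf_zero (R : comNzRingType) (T : Type) (al be u2 v2 u3 v3 : T -> R)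
  (la mu k1 k2 k3 : R) (A B C : T) :
  (forall Z, mu * u2 Z = la * v2 Z) -> (forall Z, mu * u3 Z = la * v3 Z) ->
  let sg := fun Z => mu * al Z - la * be Z in
  let om := fun Z T => k1 * (al Z * be T - al T * be Z)
     + k2 * (al Z * v2 T - al T * v2 Z + u2 Z * be T - u2 T * be Z)
     + k3 * (al Z * v3 T - al T * v3 Z + u3 Z * be T - u3 T * be Z) in
  sg A * om B C - sg B * om A C + sg C * om A B = 0.
Proof.
move=> h2 h3 sg om.
pose det (f g h : T -> R) := f A * (g B * h C - g C * h B) - f B * (g A * h C - g C * h A)
   + f C * (g A * h B - g B * h A).
pose d2 := fun Z => la * v2 Z - mu * u2 Z.
pose d3 := fun Z => la * v3 Z - mu * u3 Z.
have E : sg A * om B C - sg B * om A C + sg C * om A B = k2 * det al be d2 + k3 * det al be d3.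
  rewrite /sg /om /det /d2 /d3; ring.
have z2 : forall Z, d2 Z = 0 by move=> Z; rewrite /d2 -h2 subrr.
have z3 : forall Z, d3 Z = 0 by move=> Z; rewrite /d3 -h3 subrr.
by rewrite E /det !z2 !z3; ring.
Qed.

Lemma tq (R : comNzRingType) n (q C : 'rV[R]_n) : (q *m C^T) 0 0 = (C *m q^T) 0 0.
Proof. by rewrite !mxE; apply: eq_bigr => i _; rewrite !mxE mulrC. Qed.
Lemma rc (R : comNzRingType) n m (q : 'rV[R]_n) (E : 'cV[R]_n) (z : 'rV[R]_m) :
  q *m (E *m z) = (q *m E) 0 0 *: z.
Proof. by rewrite mulmxA {1}[q *m E]mx11_scalar mul_scalar_mx. Qed.
Lemma sT (R : comNzRingType) n (c d : 'rV[R]_n) (N : 'M[R]_n) :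
  (c *m N *m d^T) 0 0 = (d *m N^T *m c^T) 0 0.
Proof. by rewrite -[in LHS](trmxK (c *m N *m d^T)) [in LHS]mxE !trmx_mul trmxK mulmxA. Qed.

Lemma complete_unit (R : fieldType) (n : nat) (A Q : 'M[R]_n) :
  (forall u : 'rV_n, (u <= A + Q)%MS) ->
  (forall u : 'rV_n, (u <= A)%MS -> (u <= Q)%MS -> u = 0) ->
  exists K : 'M[R]_n, (K <= Q)%MS /\ (A + K) \in unitmx.
Proof.
move=> hfull hcap.
have rfull : \rank (A + Q)%MS = n.
  have : row_full (A + Q)%MS by rewrite -sub1mx; apply/row_subP => i; apply: hfull.
  by move/eqP.
have rcap : \rank (A :&: Q)%MS = 0%N.
  apply/eqP; rewrite mxrank_eq0 -submx0; apply/row_subP => i.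
  have := row_sub i (A :&: Q)%MS.
  rewrite sub_capmx => /andP[h1 h2].
  by rewrite (hcap _ h1 h2) sub0mx.
have rQ : \rank Q = (n - \rank A)%N.
  have := mxrank_sum_cap A Q; rewrite rfull rcap addn0 => e.
  have h (x y z : nat) : z = (x + y)%N -> y = (z - x)%N by move=> ->; rewrite addKn.
  exact: h.
set KA := kermx A.
have rKA : \rank KA = \rank Q by rewrite mxrank_ker rQ.
exists (invmx (row_ebase KA) *m pid_mx (\rank KA) *m row_ebase Q).
split.
  rewrite -mulmxA; apply: submx_trans (submxMl _ _) _.
  have e : Q = col_ebase Q *m (pid_mx (\rank Q) *m row_ebase Q) by rewrite mulmxA mulmx_ebase.
  by rewrite rKA -[X in (X <= _)%MS](mulKmx (col_ebase_unit Q)) -e submxMl.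
rewrite -row_free_unit -kermx_eq0 -submx0; apply/row_subP => i.
set u := row i _.
have : u *m (A + invmx (row_ebase KA) *m pid_mx (\rank KA) *m row_ebase Q) = 0.
  by apply/sub_kermxP; apply: row_sub.
set K := _ *m row_ebase Q.
have KQ : (K <= Q)%MS.
  rewrite /K -mulmxA; apply: submx_trans (submxMl _ _) _.
  have e : Q = col_ebase Q *m (pid_mx (\rank Q) *m row_ebase Q) by rewrite mulmxA mulmx_ebase.
  by rewrite rKA -[X in (X <= _)%MS](mulKmx (col_ebase_unit Q)) -e submxMl.
rewrite mulmxDr => /eqP; rewrite addr_eq0 => /eqP huAK.
have uA0 : u *m A = 0.
  apply: hcap; first exact: submxMl.
  by rewrite huAK eqmx_opp; apply: submx_trans (submxMl _ _) KQ.
have uK0 : u *m K = 0 by apply/eqP; rewrite -oppr_eq0 -huAK uA0.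
have : (u <= KA)%MS by apply/sub_kermxP.
case/submxP => d ud.
have eKA : d *m KA = d *m col_ebase KA *m pid_mx (\rank KA) *m row_ebase KA.
  by rewrite -!mulmxA; congr (_ *m _); rewrite mulmxA; exact: (esym (mulmx_ebase KA)).
move: uK0; rewrite ud eKA /K !mulmxA.
rewrite mulmxK ?row_ebase_unit //.
rewrite -(mulmxA _ (pid_mx _)) pid_mx_id ?rank_leq_row //.
move/(congr1 (mulmx^~ (invmx (row_ebase Q)))); rewrite mulmxK ?row_ebase_unit // mul0mx => h0.
by rewrite h0 mul0mx sub0mx.
Qed.

Lemma lin3 (R : comNzRingType) (n : nat) (e : 'rV[R]_n -> R) :
  (forall k x y, e (k *: x + y) = k * e x + e y) ->
  forall a b d x y z, e (a *: x + b *: y + d *: z) = a * e x + b * e y + d * e z.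
Proof.
move=> hf a b d x y z.
have f0 : e 0 = 0.
  have := hf 1 0 0; rewrite scaler0 addr0 mul1r => h.
  by apply: (addrI (e 0)); rewrite -h addr0.
have fD : forall x y, e (x + y) = e x + e y.
  by move=> x' y'; rewrite -{1}[x']scale1r hf mul1r.
by rewrite !fD -[a *: x]addr0 -[b *: y]addr0 -[d *: z]addr0 !hf f0 !addr0.
Qed.

Definition Wf {R : realType} {n : nat} (c : 'rV[R]_n -> 'rV[R]_n -> 'rV[R]_n)
  (y : 'cV[R]_n) (a b : 'rV[R]_n) : R := (c a b *m y) 0 0.

Lemma core (R : realType) (n : nat) (c : 'rV[R]_n -> 'rV[R]_n -> 'rV[R]_n) :
  (forall k a a' b, c (k *: a + a') b = k *: c a b + c a' b) ->
  (forall k a b b', c a (k *: b + b') = k *: c a b + c a b') ->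
  (forall a, c a a = 0) ->
  (exists y1 y2 y3 : 'cV[R]_n,
     (forall k1 k2 k3, (forall a b, k1 * Wf c y1 a b + k2 * Wf c y2 a b + k3 * Wf c y3 a b = 0) ->
        [/\ k1 = 0, k2 = 0 & k3 = 0]) /\
     (forall y, exists k1 k2 k3, forall a b,
        Wf c y a b = k1 * Wf c y1 a b + k2 * Wf c y2 a b + k3 * Wf c y3 a b)) ->
  (forall y a b d e, wedge22 (Wf c y) (Wf c y) a b d e = 0) ->
  (forall s : 'cV[R]_n, (exists a : 'rV[R]_n, (a *m s) 0 0 != 0) ->
     exists y a b d, wedge12 (fun a : 'rV[R]_n => (a *m s) 0 0) (Wf c y) a b d != 0) ->
  exists N : 'M[R]_n, N \in unitmx /\
    forall a b d, (c a b *m N *m d^T) 0 0 = - (c a d *m N *m b^T) 0 0.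
Proof.
move=> cL cR cA [y1 [y2 [y3 [indep span]]]] simple nocf.
set w := Wf c in indep span simple nocf *.
have c0l : forall b, c 0 b = 0.
  by move=> b; have := cL 1 0 0 b; rewrite scaler0 addr0 scale1r => h; apply: (addrI (c 0 b)); rewrite addr0.
have c0r : forall a, c a 0 = 0.
  by move=> a; have := cR 1 a 0 0; rewrite scaler0 addr0 scale1r => h; apply: (addrI (c a 0)); rewrite addr0.
have cDl : forall a a' b, c (a + a') b = c a b + c a' b.
  by move=> a a' b; rewrite -{1}[a]scale1r cL scale1r.
have cDr : forall a b b', c a (b + b') = c a b + c a b'.
  by move=> a b b'; rewrite -{1}[b]scale1r cR scale1r.
have cZl : forall k a b, c (k *: a) b = k *: c a b.
  by move=> k a b; rewrite -[k *: a]addr0 cL c0l addr0.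
have cZr : forall k a b, c a (k *: b) = k *: c a b.
  by move=> k a b; rewrite -[k *: b]addr0 cR c0r addr0.
have cN : forall a b, c b a = - c a b.
  move=> a b; apply/eqP; rewrite -addr_eq0; apply/eqP.
  by have := cA (a + b); rewrite cDl !cDr !cA add0r addr0 addrC.
have wDy : forall y y' a b, w (y + y') a b = w y a b + w y' a b.
  by move=> y y' a b; rewrite /w /Wf mulmxDr mxE.
have wZy : forall k y a b, w (k *: y) a b = k * w y a b.
  by move=> k y a b; rewrite /w /Wf -scalemxAr mxE.
have wDl : forall y a a' b, w y (a + a') b = w y a b + w y a' b.
  by move=> y a a' b; rewrite /w /Wf cDl mulmxDl mxE.
have wDr : forall y a b b', w y a (b + b') = w y a b + w y a b'.
  by move=> y a b b'; rewrite /w /Wf cDr mulmxDl mxE.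
have wZl : forall y k a b, w y (k *: a) b = k * w y a b.
  by move=> y k a b; rewrite /w /Wf cZl -scalemxAl mxE.
have wZr : forall y k a b, w y a (k *: b) = k * w y a b.
  by move=> y k a b; rewrite /w /Wf cZr -scalemxAl mxE.
have wA : forall y a, w y a a = 0.
  by move=> y a; rewrite /w /Wf cA mul0mx mxE.
have wN : forall y a b, w y b a = - w y a b.
  by move=> y a b; rewrite /w /Wf cN mulNmx mxE.
have wB : forall y y' a b, w (y - y') a b = w y a b - w y' a b.
  by move=> y y' a b; rewrite wDy -scaleN1r wZy; ring.
have polar : forall y y' A B C D, wedge22 (w y) (w y') A B C D = 0.
  move=> y y' A B C D.
  have h1 := simple (y + y') A B C D.
  have h2 := simple y A B C D.
  have h3 := simple y' A B C D.
  move: h1 h2 h3; rewrite /wedge22 -/w !wDy => h1 h2 h3.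
  lra.
have lemA : forall y X Y, w y X Y = 1 -> forall Z T, w y Z T = w y X Z * w y Y T - w y X T * w y Y Z.
  move=> y X Y h Z T; have := simple y X Y Z T; rewrite /wedge22 -/w h => e.
  lra.
have [X [Y0 hXY0]] : exists X Y, w y1 X Y != 0.
  apply: NNPP => hn.
  have h0 : forall a b, w y1 a b = 0.
    move=> a b; case: (eqVneq (w y1 a b) 0) => // hne; exfalso; apply: hn; exists a, b; exact: hne.
  have [] := indep 1 0 0.
    by move=> a b; rewrite h0; ring.
  by move=> /eqP; rewrite oner_eq0.
set Y := (w y1 X Y0)^-1 *: Y0.
have pXY : w y1 X Y = 1 by rewrite /Y wZr mulVf.
set p := y1.
set c2 := w y2 X Y.
set c3 := w y3 X Y.
set q2 := y2 - c2 *: p.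
set q3 := y3 - c3 *: p.
have q2E : forall a b, w q2 a b = w y2 a b - c2 * w p a b by move=> a b; rewrite wB wZy.
have q3E : forall a b, w q3 a b = w y3 a b - c3 * w p a b by move=> a b; rewrite wB wZy.
have q2XY : w q2 X Y = 0 by rewrite q2E pXY mulr1 subrr.
have q3XY : w q3 X Y = 0 by rewrite q3E pXY mulr1 subrr.
have F1 : forall q, w q X Y = 0 -> forall Z T,
   w q Z T = w p X Z * w q Y T - w p X T * w q Y Z + w q X Z * w p Y T - w q X T * w p Y Z.
  move=> q hq Z T; have := polar p q X Y Z T; rewrite /wedge22 pXY hq => e.
  lra.
have F2 : forall q, w q X Y = 0 -> forall Z T, w q X Z * w q Y T = w q X T * w q Y Z.
  move=> q hq Z T; have := simple q X Y Z T; rewrite /wedge22 hq => e.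
  lra.
have F3 := lemA p X Y pXY.
have y2E : forall a b, w y2 a b = w q2 a b + c2 * w p a b by move=> a b; rewrite q2E; ring.
have y3E : forall a b, w y3 a b = w q3 a b + c3 * w p a b by move=> a b; rewrite q3E; ring.
have spanq : forall y, exists k1 k2 k3, forall a b,
    w y a b = k1 * w p a b + k2 * w q2 a b + k3 * w q3 a b.
  move=> y; have [k1 [k2 [k3 hk]]] := span y.
  exists (k1 + k2 * c2 + k3 * c3), k2, k3 => a b.
  rewrite hk y2E y3E; ring.
have [X3 hD] : exists X3, w q2 X X3 * w q3 Y X3 - w q3 X X3 * w q2 Y X3 != 0.
  apply: NNPP => hn.
  have hD0 : forall Z, w q2 X Z * w q3 Y Z - w q3 X Z * w q2 Y Z = 0.
    move=> Z; case: (eqVneq (w q2 X Z * w q3 Y Z - w q3 X Z * w q2 Y Z) 0) => // hne.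
    by exfalso; apply: hn; exists Z.
  have q23XY : w (q2 + q3) X Y = 0 by rewrite wDy q2XY q3XY addr0.
  have key : forall Z T, w q2 X Z * w q3 Y T = w q3 X T * w q2 Y Z.
    move=> Z T.
    have e1 := hD0 (Z + T); have e2 := hD0 Z; have e3 := hD0 T.
    have e4 := F2 _ q23XY Z T; have e5 := F2 _ q2XY Z T; have e6 := F2 _ q3XY Z T.
    move: e1 e4; rewrite !wDr !(wDy q2 q3) => e1 e4.
    lra.
  have [Z0 hZ0] : exists Z0, (w q2 X Z0 != 0) || (w q2 Y Z0 != 0).
    apply: NNPP => hn2.
    have hz : forall Z, w q2 X Z = 0 /\ w q2 Y Z = 0.
      move=> Z; split; apply: NNPP => h; apply: hn2; exists Z; apply/orP;
        [left|right]; apply/eqP; exact: h.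
    have hh : forall a b, - c2 * w y1 a b + 1 * w y2 a b + 0 * w y3 a b = 0.
      move=> a b.
      rewrite y2E (F1 _ q2XY a b) !(proj1 (hz _)) !(proj2 (hz _)); ring.
    have [_ h1 _] := indep _ _ _ hh.
    by move/eqP: h1; rewrite oner_eq0.
  set la := w q2 X Z0.
  set mu := w q2 Y Z0.
  have rel2 : forall T, mu * w q2 X T = la * w q2 Y T.
    by move=> T; have := F2 _ q2XY Z0 T; rewrite -/la -/mu => e; lra.
  have rel3 : forall T, mu * w q3 X T = la * w q3 Y T.
    by move=> T; have := key Z0 T; rewrite -/la -/mu => e; lra.
  pose sg := fun a => mu * w p X a - la * w p Y a.
  have sgL : forall k x y, sg (k *: x + y) = k * sg x + sg y.
    by move=> k x y; rewrite /sg !wDr !wZr; ring.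
  have hs := lin_repr _ _ _ sgL.
  have hnz : exists a : 'rV[R]_n, (a *m \col_i sg 'e_i) 0 0 != 0.
    case: (eqVneq la 0) => hla.
      exists Y; rewrite -hs /sg pXY wA mulr0 subr0 mulr1.
      by move: hZ0; rewrite -/la -/mu hla eqxx.
    exists X; rewrite -hs /sg wA (wN _ X Y) pXY mulr0 sub0r mulrN1 opprK //.
  have [y [A [B [C hne]]]] := nocf _ hnz.
  have [k1 [k2 [k3 hk]]] := spanq y.
  move/eqP: hne; apply.
  rewrite /wedge12 -!hs !hk.
  rewrite (F1 _ q2XY B C) (F1 _ q2XY A C) (F1 _ q2XY A B).
  rewrite (F1 _ q3XY B C) (F1 _ q3XY A C) (F1 _ q3XY A B).
  rewrite (F3 B C) (F3 A C) (F3 A B).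
  exact: (@cf_zero _ _ (fun Z => w p X Z) (fun Z => w p Y Z) (fun Z => w q2 X Z) (fun Z => w q2 Y Z)
     (fun Z => w q3 X Z) (fun Z => w q3 Y Z) la mu k1 k2 k3 A B C rel2 rel3).
set u2 := w q2 X X3. set v2 := w q2 Y X3. set u3 := w q3 X X3. set v3 := w q3 Y X3.
set aX3 := w p X X3. set bX3 := w p Y X3.
set dl := u2 * v3 - u3 * v2 in hD.
set z1 := dl^-1 *: ((- u3) *: q2 + u2 *: q3).
set z2 := dl^-1 *: ((- v3) *: q2 + v2 *: q3).
set z3 := p - bX3 *: z1 + aX3 *: z2.
have z1E : forall a b, w z1 a b = dl^-1 * (- u3 * w q2 a b + u2 * w q3 a b).
  by move=> a b; rewrite wZy wDy !wZy.
have z2E : forall a b, w z2 a b = dl^-1 * (- v3 * w q2 a b + v2 * w q3 a b).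
  by move=> a b; rewrite wZy wDy !wZy.
have z3E : forall a b, w z3 a b = w p a b - bX3 * w z1 a b + aX3 * w z2 a b.
  by move=> a b; rewrite wDy wB !wZy.
have pX3X : w p X3 X = - aX3 by rewrite wN.
have q2X3X : w q2 X3 X = - u2 by rewrite wN.
have q3X3X : w q3 X3 X = - u3 by rewrite wN.
have Phi : forall y a b, w y a b = w y Y X3 * w z1 a b + w y X3 X * w z2 a b + w y X Y * w z3 a b.
  move=> y a b; have [k1 [k2 [k3 hk]]] := spanq y.
  rewrite !hk z3E !z1E !z2E pX3X q2X3X q3X3X pXY q2XY q3XY -/u2 -/v2 -/u3 -/v3 -/aX3 -/bX3.
  rewrite /dl; field.
  by [].
have t1YX3 : w z1 Y X3 = 1 by rewrite z1E -/v2 -/v3 /dl; field.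
have t1X3X : w z1 X3 X = 0 by rewrite z1E q2X3X q3X3X /dl; field.
have t1XY : w z1 X Y = 0 by rewrite z1E q2XY q3XY; ring.
have t2YX3 : w z2 Y X3 = 0 by rewrite z2E -/v2 -/v3 /dl; field.
have t2X3X : w z2 X3 X = 1 by rewrite z2E q2X3X q3X3X /dl; field.
have t2XY : w z2 X Y = 0 by rewrite z2E q2XY q3XY; ring.
have t3YX3 : w z3 Y X3 = 0 by rewrite z3E t1YX3 t2YX3 -/bX3; ring.
have t3X3X : w z3 X3 X = 0 by rewrite z3E t1X3X t2X3X pX3X; ring.
have t3XY : w z3 X Y = 1 by rewrite z3E t1XY t2XY pXY; ring.
have t1XX3 : w z1 X X3 = 0 by rewrite wN t1X3X oppr0.
have t2XX3 : w z2 X X3 = -1 by rewrite wN t2X3X.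
have t3XX3 : w z3 X X3 = 0 by rewrite wN t3X3X oppr0.
pose e1 := fun a => w z2 X3 a.
pose e2 := fun a => w z3 X a.
pose e3 := fun a => w z1 Y a.
have R13 : forall T, w z1 X3 T = - e2 T.
  move=> T; have := polar z1 z3 X Y X3 T.
  rewrite /wedge22 t1XY t1XX3 t1YX3 t3XY t3XX3 t3YX3 /e2 => e; lra.
have R12 : forall T, w z2 X T = - e3 T.
  move=> T; have := polar z1 z2 X Y X3 T.
  rewrite /wedge22 t1XY t1XX3 t1YX3 t2XY t2XX3 t2YX3 /e3 => e; lra.
have R23 : forall T, w z3 Y T = - e1 T.
  move=> T; have := polar z2 z3 X Y X3 T.
  rewrite /wedge22 t2XY t2XX3 t2YX3 t3XY t3XX3 t3YX3 /e1 => e; lra.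
have om1 : forall Z T, w z1 Z T = e2 Z * e3 T - e2 T * e3 Z.
  by move=> Z T; rewrite (lemA z1 Y X3 t1YX3 Z T) !R13 /e3; ring.
have om2 : forall Z T, w z2 Z T = e3 Z * e1 T - e3 T * e1 Z.
  by move=> Z T; rewrite (lemA z2 X3 X t2X3X Z T) !R12 /e1; ring.
have om3 : forall Z T, w z3 Z T = e1 Z * e2 T - e1 T * e2 Z.
  by move=> Z T; rewrite (lemA z3 X Y t3XY Z T) !R23 /e2; ring.
have e1L : forall k x y, e1 (k *: x + y) = k * e1 x + e1 y by move=> k x y; rewrite /e1 wDr wZr.
have e2L : forall k x y, e2 (k *: x + y) = k * e2 x + e2 y by move=> k x y; rewrite /e2 wDr wZr.
have e3L : forall k x y, e3 (k *: x + y) = k * e3 x + e3 y by move=> k x y; rewrite /e3 wDr wZr.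
have hE1 := lin_repr _ _ _ e1L.
have hE2 := lin_repr _ _ _ e2L.
have hE3 := lin_repr _ _ _ e3L.
set E1 := \col_i e1 'e_i in hE1.
set E2 := \col_i e2 'e_i in hE2.
set E3 := \col_i e3 'e_i in hE3.
have e1X : e1 X = 1 by rewrite /e1 t2X3X.
have e1Y : e1 Y = 0 by rewrite /e1 wN t2YX3 oppr0.
have e1X3 : e1 X3 = 0 by rewrite /e1 wA.
have e2X : e2 X = 0 by rewrite /e2 wA.
have e2Y : e2 Y = 1 by rewrite /e2 t3XY.
have e2X3 : e2 X3 = 0 by rewrite /e2 t3XX3.
have e3X : e3 X = 0 by rewrite /e3 wN t1XY oppr0.
have e3Y : e3 Y = 0 by rewrite /e3 wA.
have e3X3 : e3 X3 = 1 by rewrite /e3 t1YX3.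
pose wr (q : 'rV[R]_n) a b := (q *m (c a b)^T) 0 0.
have wrE : forall q a b, wr q a b = w q^T a b by move=> q a b; rewrite /wr tq.
have wrz : forall z a b, wr z^T a b = w z a b by move=> z a b; rewrite wrE trmxK.
have wrD : forall q q' a b, wr (q + q') a b = wr q a b + wr q' a b.
  by move=> q q' a b; rewrite /wr mulmxDl mxE.
have wrZ : forall k q a b, wr (k *: q) a b = k * wr q a b.
  by move=> k q a b; rewrite /wr -scalemxAl mxE.
have wrB : forall q q' a b, wr (q - q') a b = wr q a b - wr q' a b.
  by move=> q q' a b; rewrite wrD -scaleN1r wrZ; ring.
set Pr := (c Y X3)^T *m z1^T + (c X3 X)^T *m z2^T + (c X Y)^T *m z3^T.
set Qm := 1%:M - Pr.
set At := E1 *m z1^T + E2 *m z2^T + E3 *m z3^T.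
have PrE : forall q, q *m Pr = wr q Y X3 *: z1^T + wr q X3 X *: z2^T + wr q X Y *: z3^T.
  by move=> q; rewrite /Pr !mulmxDr !rc.
have AtE : forall d, d *m At = e1 d *: z1^T + e2 d *: z2^T + e3 d *: z3^T.
  by move=> d; rewrite /At !mulmxDr !rc -hE1 -hE2 -hE3.
have Q1 : forall d a b, wr (d *m Qm) a b = 0.
  move=> d a b; rewrite /Qm mulmxBr mulmx1 PrE wrB !wrD !wrZ !wrz !wrE.
  rewrite (Phi d^T a b); ring.
have [K [KQ KU]] : exists K : 'M[R]_n, (K <= Qm)%MS /\ (At + K) \in unitmx.
  apply: complete_unit.
    move=> u.
    set dv := wr u Y X3 *: X + wr u X3 X *: Y + wr u X Y *: X3.
    have -> : u = dv *m At + u *m Qm.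
      rewrite /Qm mulmxBr mulmx1 PrE AtE /dv.
      rewrite (lin3 _ _ _ e1L) (lin3 _ _ _ e2L) (lin3 _ _ _ e3L) e1X e1Y e1X3 e2X e2Y e2X3 e3X e3Y e3X3.
      by rewrite !mulr1 !mulr0 !addr0 !add0r addrC subrK.
    by apply: addmx_sub_adds; apply: submxMl.
  move=> u /submxP [d ud] /submxP [d' ud'].
  have hw : forall a b, wr u a b = 0 by move=> a b; rewrite ud' Q1.
  move: (hw Y X3) (hw X3 X) (hw X Y).
  rewrite ud AtE !wrD !wrZ !wrz t1YX3 t1X3X t1XY t2YX3 t2X3X t2XY t3YX3 t3X3X t3XY.
  rewrite !mulr0 !mulr1 !addr0 !add0r => h1 h2 h3.
  by rewrite h1 h2 h3 !scale0r !addr0.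
exists (At + K)^T; split; first by rewrite unitmx_tr.
have TE : forall a b d, (c a b *m (At + K)^T *m d^T) 0 0 =
    e1 d * w z1 a b + e2 d * w z2 a b + e3 d * w z3 a b.
  move=> a b d; rewrite sT trmxK mulmxDr.
  have : (d *m K <= Qm)%MS by apply: submx_trans KQ; apply: submxMl.
  case/submxP => d' hd'.
  rewrite -/(wr _ a b) wrD hd' Q1 addr0 AtE !wrD !wrZ !wrz.
  by [].
move=> a b d; rewrite !TE !om1 !om2 !om3; ring.
Qed.

Theorem proposition7p2 (R : realType) (n : nat)
  (br : 'rV[R]_(n + n) -> 'rV[R]_(n + n) -> 'rV[R]_(n + n))
  (V : 'M[R]_(n + n)) :
  lie_bracket br ->
  \rank V = n ->
  NH_rank3 br V ->
  NH_image_simple br V ->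
  NH_no_common_factor br V ->
  forall H : 'M[R]_(n + n),
    lie_subalgebra br H -> complementary V H ->
    exists G : 'M[R]_(n + n),
      [/\ compatible_GL_structure V H G, tau2_zero br V G & tau56_zero br H G].
Proof.
move=> [bL bR bA bJ] hrV hrk3 hsimp hnocf H hsub [hsum hcap].
have rcap : \rank (V :&: H)%MS = 0%N.
  apply/eqP; rewrite mxrank_eq0 -submx0; apply/row_subP => i.
  have := row_sub i (V :&: H)%MS; rewrite sub_capmx => /andP[h1 h2].
  by rewrite (hcap _ h1 h2) sub0mx.
have rfull : \rank (V + H)%MS = (n + n)%N.
  have : row_full (V + H)%MS.
    rewrite -sub1mx; apply/row_subP => i.
    have [v [h [hv hh ->]]] := hsum (row i 1%:M).
    exact: addmx_sub_adds.
  by move/eqP.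
have hrH : \rank H = n.
  have := mxrank_sum_cap V H; rewrite rfull rcap hrV addn0 => /eqP; rewrite eqn_add2l => /eqP e.
  by rewrite -e.
pose BV := castmx (hrV, erefl (n + n)%N) (row_base V).
pose BH := castmx (hrH, erefl (n + n)%N) (row_base H).
have eqBV : (BV :=: V)%MS := eqmx_trans (eqmx_cast _ _) (eq_row_base V).
have eqBH : (BH :=: H)%MS := eqmx_trans (eqmx_cast _ _) (eq_row_base H).
pose P := col_mx BV BH.
have PU : P \in unitmx.
  rewrite -row_full_unit -sub1mx.
  rewrite (eqmx_trans (eqmx_sym (addsmxE BV BH)) (adds_eqmx eqBV eqBH)) sub1mx.
  by rewrite /row_full rfull.
have rowV : forall a : 'rV[R]_n, row_mx a (0 : 'rV_n) *m P = a *m BV.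
  by move=> a; rewrite mul_row_col mul0mx addr0.
have rowH : forall b : 'rV[R]_n, row_mx (0 : 'rV_n) b *m P = b *m BH.
  by move=> b; rewrite mul_row_col mul0mx add0r.
have hinV : forall a : 'rV[R]_n, (row_mx a 0 *m P <= V)%MS.
  by move=> a; rewrite rowV -eqBV submxMl.
have hinH : forall b : 'rV[R]_n, (row_mx 0 b *m P <= H)%MS.
  by move=> b; rewrite rowH -eqBH submxMl.
have hVin : forall X, (X <= V)%MS -> exists a : 'rV[R]_n, X = row_mx a 0 *m P.
  by move=> X; rewrite -eqBV => /submxP [D ->]; exists D; rewrite rowV.
have hHin : forall X, (X <= H)%MS -> exists b : 'rV[R]_n, X = row_mx 0 b *m P.
  by move=> X; rewrite -eqBH => /submxP [D ->]; exists D; rewrite rowH.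
have decomp : forall X, X = row_mx (lsubmx (X *m invmx P) : 'rV_n) (rsubmx (X *m invmx P) : 'rV_n) *m P.
  by move=> X; rewrite hsubmxK mulmxKV.
have bDl : forall X Y Z, br (X + Y) Z = br X Z + br Y Z.
  by move=> X Y Z; rewrite -{1}[X]scale1r bL scale1r.
have bDr : forall X Y Z, br X (Y + Z) = br X Y + br X Z.
  by move=> X Y Z; rewrite -{1}[Y]scale1r bR scale1r.
have brN : forall X Y, br Y X = - br X Y.
  move=> X Y; apply/eqP; rewrite -addr_eq0; apply/eqP.
  by have := bA (X + Y); rewrite bDl !bDr !bA add0r addr0 addrC.
pose c := fun a b : 'rV[R]_n => rsubmx (br (row_mx a 0 *m P) (row_mx b 0 *m P) *m invmx P).
have rowL : forall k (a a' : 'rV[R]_n),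
    row_mx (k *: a + a') (0 : 'rV_n) *m P = k *: (row_mx a 0 *m P) + row_mx a' 0 *m P.
  by move=> k a a'; rewrite scalemxAl -mulmxDl scale_row_mx add_row_mx scaler0 addr0.
have rsubL : forall k (A B : 'rV[R]_(n + n)), rsubmx (k *: A + B) = k *: rsubmx A + rsubmx B.
  by move=> k A B; apply/matrixP => i j; rewrite !mxE.
have cL : forall k a a' b, c (k *: a + a') b = k *: c a b + c a' b.
  by move=> k a a' b; rewrite /c rowL bL mulmxDl -scalemxAl rsubL.
have cR : forall k a b b', c a (k *: b + b') = k *: c a b + c a b'.
  by move=> k a b b'; rewrite /c rowL bR mulmxDl -scalemxAl rsubL.
have cA : forall a, c a a = 0.
  by move=> a; rewrite /c bA mul0mx; apply/matrixP => i j; rewrite !mxE.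
have fa_ann : forall xi, in_ann V xi -> forall X,
    form_app xi X = (rsubmx (X *m invmx P) *m dsubmx (P *m xi)) 0 0.
  move=> xi hxi X.
  have u0 : usubmx (P *m xi) = 0 :> 'cV_n.
    apply/matrixP => i j; rewrite [j]ord1.
    have := hxi _ (hinV 'e_i); rewrite /form_app -mulmxA.
    rewrite -{1}[P *m xi]vsubmxK mul_row_col mul0mx addr0 -rowE.
    by rewrite [(row _ _) _ _]mxE => ->; rewrite mxE.
  rewrite /form_app.
  have -> : X *m xi = (X *m invmx P) *m (P *m xi) by rewrite mulmxA mulmxKV.
  set t := X *m invmx P; set s := P *m xi.
  by rewrite -{1}(hsubmxK t) -{1}(vsubmxK s) mul_row_col u0 mulmx0 add0r.
pose xiy := fun y : 'cV[R]_n => invmx P *m col_mx (0 : 'cV_n) y.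
have ann_y : forall y, in_ann V (xiy y).
  move=> y X /hVin [a ->]; rewrite /form_app /xiy mulmxA mulmxK //.
  by rewrite mul_row_col mulmx0 mul0mx addr0 mxE.
have dsub_y : forall y, dsubmx (P *m xiy y) = y.
  by move=> y; rewrite /xiy mulKVmx // col_mxKd.
have dfE : forall xi, in_ann V xi -> forall a b,
    dform br xi (row_mx a 0 *m P) (row_mx b 0 *m P) = - Wf c (dsubmx (P *m xi)) a b.
  by move=> xi hxi a b; rewrite /dform fa_ann.
pose sgm := fun s : 'cV[R]_n => invmx P *m col_mx s (0 : 'cV_n).
have fa_s : forall s a, form_app (sgm s) (row_mx a 0 *m P) = (a *m s) 0 0.
  by move=> s0 a; rewrite /form_app /sgm mulmxA mulmxK // mul_row_col mul0mx addr0.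
have rk3 : exists y1 y2 y3 : 'cV[R]_n,
     (forall k1 k2 k3, (forall a b, k1 * Wf c y1 a b + k2 * Wf c y2 a b + k3 * Wf c y3 a b = 0) ->
        [/\ k1 = 0, k2 = 0 & k3 = 0]) /\
     (forall y, exists k1 k2 k3, forall a b,
        Wf c y a b = k1 * Wf c y1 a b + k2 * Wf c y2 a b + k3 * Wf c y3 a b).
  have [xi1 [xi2 [xi3 [a1 a2 a3 ind sp]]]] := hrk3.
  exists (dsubmx (P *m xi1)), (dsubmx (P *m xi2)), (dsubmx (P *m xi3)); split.
    move=> k1 k2 k3 hk; apply: ind => X Y /hVin [aX ->] /hVin [aY ->].
    rewrite !dfE //; have := hk aX aY; lra.
  move=> y; have [k1 [k2 [k3 hk]]] := sp _ (ann_y y).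
  exists k1, k2, k3 => a b.
  have := hk _ _ (hinV a) (hinV b); rewrite !dfE // dsub_y; lra.
have simple : forall y a b d e, wedge22 (Wf c y) (Wf c y) a b d e = 0.
  move=> y a b d e.
  have := hsimp _ (ann_y y) _ _ _ _ (hinV a) (hinV b) (hinV d) (hinV e).
  rewrite /wedge22 !dfE // dsub_y; lra.
have nocf : forall s : 'cV[R]_n, (exists a : 'rV[R]_n, (a *m s) 0 0 != 0) ->
     exists y a b d, wedge12 (fun a : 'rV[R]_n => (a *m s) 0 0) (Wf c y) a b d != 0.
  move=> s0 [a0 ha0]; apply: NNPP => hn; apply: hnocf.
  exists (sgm s0); split.
    by exists (row_mx a0 0 *m P); split; [exact: hinV | rewrite fa_s].
  move=> xi hxi X Y Z /hVin [aX ->] /hVin [aY ->] /hVin [aZ ->].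
  have h0 : wedge12 (fun a : 'rV[R]_n => (a *m s0) 0 0) (Wf c (dsubmx (P *m xi))) aX aY aZ = 0.
    case: (eqVneq (wedge12 (fun a : 'rV[R]_n => (a *m s0) 0 0) (Wf c (dsubmx (P *m xi))) aX aY aZ) 0) => // hne.
    by exfalso; apply: hn; exists (dsubmx (P *m xi)), aX, aY, aZ.
  move: h0; rewrite /wedge12 !fa_s !dfE //; lra.
have [N [NU Nalt]] := core _ _ c cL cR cA rk3 simple nocf.
have oppE : forall M : 'M[R]_(1, 1), (- M) 0 0 = - M 0 0 by move=> M; rewrite mxE.
have addE : forall M M' : 'M[R]_(1, 1), (M + M') 0 0 = M 0 0 + M' 0 0 by move=> M M'; rewrite mxE.
have zeroE : (0 : 'M[R]_(1, 1)) 0 0 = 0 by rewrite mxE.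
pose J := block_mx (0 : 'M[R]_n) N^T N 0.
pose G := invmx P *m J *m (invmx P)^T.
have bilJ : forall a b a' b' : 'rV[R]_n,
    (row_mx a b *m J *m (row_mx a' b')^T) 0 0 = (b *m N *m a'^T) 0 0 + (a *m N^T *m b'^T) 0 0.
  move=> a b a' b'; rewrite /J mul_row_block ?mulmx0 ?mul0mx ?add0r ?addr0 tr_row_mx mul_row_col.
  by rewrite mxE.
have bilP : forall a b a' b' : 'rV[R]_n,
    bil G (row_mx a b *m P) (row_mx a' b' *m P) = (b *m N *m a'^T) 0 0 + (a *m N^T *m b'^T) 0 0.
  move=> a b a' b'; rewrite /bil /G -bilJ trmx_mul trmx_inv.
  by rewrite !mulmxA mulmxK // mulmxKV ?unitmx_tr.
have JU : J \in unitmx.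
  have hJ : J *m block_mx 0 (invmx N) (invmx N^T) 0 = 1%:M.
    rewrite /J mulmx_block !mulmx0 !mul0mx !addr0 !add0r mulmxV ?unitmx_tr // mulmxV //.
    by rewrite [RHS]scalar_mx_block.
  by have [] := mulmx1_unit hJ.
exists G; split.
- split.
  + by rewrite /G !trmx_mul trmxK /J tr_block_mx !trmx0 trmxK !mulmxA.
  + by rewrite /G !unitmx_mul unitmx_tr unitmx_inv PU JU.
  + move=> v1 v2 h1 h2 /hVin [a1 ->] /hVin [a2 ->] /hHin [b1 ->] /hHin [b2 ->].
    rewrite -!mulmxBl -!mulmxDl !opp_row_mx !add_row_mx !oppr0 !addr0 !add0r !bilP.
    rewrite !mulNmx raddfN /= mulmxN !oppE; ring.
- move=> X Y Z /hVin [a ->] /hVin [b ->] /hVin [d ->]; split.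
    by rewrite (brN (row_mx a 0 *m P)) /bil !mulNmx oppE opprK.
  rewrite {1}(decomp (br _ (row_mx b 0 *m P))) {1}(decomp (br _ (row_mx d 0 *m P))) !bilP.
  rewrite !trmx0 !mulmx0 !zeroE !addr0.
  exact: Nalt.
- move=> X Y Z hX hY /hHin [d ->].
  have /hHin [e ->] := hsub _ _ hX hY.
  by rewrite bilP !trmx0 !mulmx0 !mul0mx !zeroE addr0.
Qed.
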